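(* Let $P$ be a rectangular box (brick) in $\mathbb{R}^3$ of volume $1$, all of whose edge lengths are at least $\frac{1}{\sqrt{2}}$. Let $e_1,e_2,e_3$ be three pairwise skew edges of $P$, and let $A\in e_1$, $B\in e_2$, $C\in e_3$ be the vertices of a triangle $ABC$. Then at least one side of the triangle $ABC$ has length at most $\sqrt{2}$.
   Context: A brick is a rectangular parallelepiped (box with pairwise orthogonal edge directions). Edges of the brick are its twelve closed edge segments. Three edges are pairwise skew if no two of them are parallel and no two intersect; in a brick such a triple consists of one edge from each of the three edge directions. ''The vertices of a triangle lie on the skew edges of the brick'' means each vertex lies on a different edge of such a triple. *)

(* Defs.v *)
From HB Require Import structures.
From mathcomp Require Import all_boot all_order all_algebra.
From mathcomp Require Import reals.
Set Implicit Arguments. Unset Strict Implicit. Unset Printing Implicit Defensive.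
Import Order.TTheory GRing.Theory Num.Theory.
Local Open Scope ring_scope.

Section Brick.
Variable R : realType.
Notation pt := 'rV[R]_3.

Definition dotp (x y : pt) : R := \sum_(k < 3) x ord0 k * y ord0 k.
Definition vnorm (x : pt) : R := Num.sqrt (dotp x x).
Definition dist (x y : pt) : R := vnorm (x - y).

(* A brick is given by a vertex O and three pairwise orthogonal edge vectors
   u 0, u 1, u 2; its points are O + sum_k t_k u_k with t_k in [0,1]. *)
Definition is_brick (u : 'I_3 -> pt) : Prop :=
  forall i j : 'I_3, i != j -> dotp (u i) (u j) = 0.

Definition brick_volume (u : 'I_3 -> pt) : R := \prod_(k < 3) vnorm (u k).

(* The edge in direction i whose other coordinates are fixed by s (s i is
   ignored): the closed segment { O + sum_k c_k u_k : c_i = t in [0,1],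
   c_k = s k (0 or 1) for k <> i }. *)
Definition on_edge (O : pt) (u : 'I_3 -> pt) (i : 'I_3) (s : 'I_3 -> bool)
    (X : pt) : Prop :=
  exists t : R, 0 <= t <= 1 /\
    X = O + \sum_(k < 3) (if k == i then t else (s k)%:R) *: u k.

Definition skew_edges (O : pt) (u : 'I_3 -> pt)
    (i : 'I_3) (s : 'I_3 -> bool) (j : 'I_3) (r : 'I_3 -> bool) : Prop :=
  i != j /\ ~ (exists X, on_edge O u i s X /\ on_edge O u j r X).

Definition collinear (A B C : pt) : Prop :=
  exists l m : R, (l != 0 \/ m != 0) /\ l *: (B - A) + m *: (C - A) = 0.

End Brick.

(* Main.v *)
Require Import Defs.
From HB Require Import structures.
From mathcomp Require Import all_boot all_order all_algebra.
From mathcomp Require Import reals.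
From mathcomp Require Import ring lra.
Import Order.TTheory GRing.Theory Num.Theory.
Local Open Scope ring_scope.

Lemma c1_ineq {R : realType} (x y z : R) : 1/2 <= y -> 1/2 <= z -> x*y*z = 1 ->
  2 <= x -> 2 <= y + z -> False.
Proof.
move=> hy hz e hx hyz.
have h0 : 0 <= (2*y-1)*(2*z-1) by apply: mulr_ge0; lra.
have h1 : 0 <= x*((2*y-1)*(2*z-1)) by apply: mulr_ge0; lra.
have h2 : 0 <= (x - 2) * (y + z - 2) by apply: mulr_ge0; lra.
nra.
Qed.
Arguments c1_ineq {R x y z}.


Lemma c3_ineq {R : realType} (x y z : R) : 1/2 <= y -> 1/2 <= z -> x*y*z = 1 ->
  2 <= x -> y + z <= 2 -> x <= 4*(2-y-z).
Proof.
move=> hy hz e hx hyz.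
have h0 : 0 <= (2*y-1)*(2*z-1) by apply: mulr_ge0; lra.
have h1 : 0 <= x*((2*y-1)*(2*z-1)) by apply: mulr_ge0; lra.
have x4 : x <= 4.
  have : 0 <= x * (4*(y*z) - 1) by apply: mulr_ge0; nra.
  nra.
have h3 : 0 <= (x-2)*(4-x) by apply: mulr_ge0; lra.
have : 0 <= x * (4*(2-y-z) - x) by nra.
move=> h4.
have hx0 : 0 < x by lra.
nra.
Qed.
Arguments c3_ineq {R x y z}.


Lemma c2_ineq {R : realType} (x y z : R) : 1/2 <= x -> 1/2 <= y -> 1/2 <= z -> x*y*z = 1 ->
  2 <= y + z -> 2 - x <= y -> (y+z)*(y+z) <= 4*y*(2-x).
Proof.
move=> hx hy hz e hyz hxy.
have hz0 : 0 < z by lra.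
suff hg : 0 <= 8*y*z - 4 - z*((y+z)*(y+z)).
  have : 0 <= z * (4*y*(2-x) - (y+z)*(y+z)) by nra.
  move=> h; nra.
have y4 : y <= 4.
  have : 0 <= y * (4*(x*z) - 1) by apply: mulr_ge0; nra.
  nra.
have yz2 : y*z <= 2.
  have : 0 <= y*z*(2*x-1) by apply: mulr_ge0; [apply: mulr_ge0|]; lra.
  nra.
have h2 : 0 <= y*y*z - 2*y*z + 1.
  have : 0 <= y*z*(y - 2 + x) by apply: mulr_ge0; [apply: mulr_ge0|]; lra.
  nra.
case: (lerP z 1) => hz1.
- set h1 := y+z-2. set w := 1 - z. set h4 := 2*z-1. set u1 := 4 - y.
  have H1 : 0 <= h1 by rewrite /h1; lra.
  have W : 0 <= w by rewrite /w; lra.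
  have H4 : 0 <= h4 by rewrite /h4; lra.
  have U1 : 0 <= u1 by rewrite /u1; lra.
  have id : 5*(8*y*z - 4 - z*((y+z)*(y+z))) =
    5*(h1*h4) + 4*(h1*u1) + 3*(h1*h1*w) + h1*w*h4 + 20*(w*h4) + h1*h4*u1.
    by rewrite /h1 /h4 /u1 /w; ring.
  have a1 : 0 <= h1*h4 by apply: mulr_ge0.
  have a2 : 0 <= h1*u1 by apply: mulr_ge0.
  have a3 : 0 <= h1*h1*w by apply: mulr_ge0; [apply: mulr_ge0|].
  have a4 : 0 <= h1*w*h4 by apply: mulr_ge0; [apply: mulr_ge0|].
  have a5 : 0 <= w*h4 by apply: mulr_ge0.
  have a6 : 0 <= h1*h4*u1 by apply: mulr_ge0; [apply: mulr_ge0|].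
  lra.
- have hy1 : 1 <= y.
    case: (lerP 1 y) => // hy1.
    have hq : 0 <= y*(2-y) by apply: mulr_ge0; lra.
    have : y*(2-y)*(2-y) <= y*(2-y)*z.
      by apply: ler_wpM2l => //; lra.
    have : y*(2-y)*z <= 1 by nra.
    move=> h5 h6.
    have : 0 < (1-y) * (-(y*y - 3*y + 1)) by apply: mulr_gt0; nra.
    nra.
  set a := z - 1. set b := y - 1. set u2 := 2 - z. set h3 := 2 - y*z.
  have A : 0 <= a by rewrite /a; lra.
  have B : 0 <= b by rewrite /b; lra.
  have H3 : 0 <= h3 by rewrite /h3; lra.
  have U2 : 0 <= u2 by rewrite /u2; nra.
  have id : 8*y*z - 4 - z*((y+z)*(y+z)) =
    3*(a*b) + 3*(a*u2) + a*a*u2 + 3*(y*y*z - 2*y*z + 1) + a*a*b + 3*(a*b*h3) + 4*(b*h3)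
    + 3*(a*(y*y*z - 2*y*z + 1)).
    by rewrite /a /b /u2 /h3; ring.
  have a1 : 0 <= a*b by apply: mulr_ge0.
  have a2 : 0 <= a*u2 by apply: mulr_ge0.
  have a3 : 0 <= a*a*u2 by apply: mulr_ge0; [apply: mulr_ge0|].
  have a4 : 0 <= a*a*b by apply: mulr_ge0; [apply: mulr_ge0|].
  have a5 : 0 <= a*b*h3 by apply: mulr_ge0; [apply: mulr_ge0|].
  have a6 : 0 <= b*h3 by apply: mulr_ge0.
  have a7 : 0 <= a*(y*y*z - 2*y*z + 1) by apply: mulr_ge0.
  lra.
Qed.
Arguments c2_ineq {R x y z}.

Lemma c4_ineq {R : realType} (x y z : R) : 1/2 <= x -> 1/2 <= y -> 1/2 <= z -> x*y*z = 1 ->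
  x <= 2 -> y + z <= 2 -> 2 - x <= y ->
  x*(2-y-z) <= 1 -> y*(2-x) <= 1 ->
  (1 - x*(2-y-z) - y*(2-x)) * (1 - x*(2-y-z) - y*(2-x)) <= 4*(x*(2-y-z))*(y*(2-x)).
Proof.
move=> hx hy hz e hx2 hyz hxy hU hV.
pose U := x*(2-y-z). pose V := y*(2-x).
have eU : y*U = 2*x*y - x*y*y - 1 by rewrite /U; nra.
pose a := 2 - x. pose b := 2*x*y - x*y*y - 1. pose d := x + y - 2. pose F2 := 2*y - 1.
pose g := 2 - x*y. pose h := y - (2*x*y - x*y*y - 1). pose i := 1 - y*(2-x).
have A : 0 <= a by rewrite /a; lra.
have B : 0 <= b.
  rewrite /b -eU; apply: mulr_ge0; first lra.
  by rewrite /U; apply: mulr_ge0; lra.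
have D : 0 <= d by rewrite /d; lra.
have FF : 0 <= F2 by rewrite /F2; lra.
have G : 0 <= g.
  have : 0 <= x*y*(2*z-1) by apply: mulr_ge0; [apply: mulr_ge0|]; lra.
  rewrite /g; nra.
have H : 0 <= h.
  rewrite /h -eU.
  have : 0 <= y*(1-U) by apply: mulr_ge0; rewrite /U; lra.
  lra.
have I : 0 <= i by rewrite /i; lra.
have id : 20*(4*(y*U)*(y*V) - (y - y*U - y*V)*(y - y*U - y*V)) =
  2*(d*F2*g*y) + 10*(a*b*d*y) + 4*(a*b*d) + 4*(a*d*i*(y*y)) + 4*(a*b*F2*x)
  + 4*(a*d*g*(y*y)) + 8*(a*F2*i*(y*y)) + 28*(a*b*F2) + 4*(F2*g*i) + 12*(F2*h*i)
  + 18*(d*g*h).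
  rewrite eU /V /a /b /d /F2 /g /h /i; ring.
have hy0 : 0 <= y by lra.
have a1 : 0 <= d*F2*g*y by do 3 (apply: mulr_ge0 => //).
have a2 : 0 <= a*b*d*y by do 3 (apply: mulr_ge0 => //).
have a3 : 0 <= a*b*d by do 2 (apply: mulr_ge0 => //).
have yy : 0 <= y*y by apply: mulr_ge0.
have a4 : 0 <= a*d*i*(y*y) by do 3 (apply: mulr_ge0 => //).
have hx0 : 0 <= x by lra.
have a5 : 0 <= a*b*F2*x by do 3 (apply: mulr_ge0 => //).
have a6 : 0 <= a*d*g*(y*y) by do 3 (apply: mulr_ge0 => //).
have a7 : 0 <= a*F2*i*(y*y) by do 3 (apply: mulr_ge0 => //).
have a8 : 0 <= a*b*F2 by do 2 (apply: mulr_ge0 => //).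
have a9 : 0 <= F2*g*i by do 2 (apply: mulr_ge0 => //).
have a10 : 0 <= F2*h*i by do 2 (apply: mulr_ge0 => //).
have a11 : 0 <= d*g*h by do 2 (apply: mulr_ge0 => //).
have key : 0 <= (y*y) * (4*U*V - (1-U-V)*(1-U-V)).
  have -> : (y*y) * (4*U*V - (1-U-V)*(1-U-V)) =
     4*(y*U)*(y*V) - (y - y*U - y*V)*(y - y*U - y*V) by ring.
  lra.
have yp : 0 < y*y by apply: mulr_gt0; lra.
have : 0 <= 4*U*V - (1-U-V)*(1-U-V).
  by rewrite -(pmulr_rge0 _ yp).
rewrite /U /V; lra.
Qed.
Arguments c4_ineq {R x y z}.



Lemma sqrt_facts {R : realType} (a : R) : 0 <= a ->
  0 <= Num.sqrt a /\ Num.sqrt a * Num.sqrt a = a.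
Proof. by move=> ha; split; [exact: sqrtr_ge0 | rewrite -expr2 sqr_sqrtr]. Qed.

Lemma sq_le {R : realType} (u v : R) : 0 <= u -> 0 <= v -> u*u <= v*v -> u <= v.
Proof. move=> hu hv h; nra. Qed.

Lemma sq_lt {R : realType} (u v : R) : 0 <= u -> 0 <= v -> u*u < v*v -> u <= v.
Proof. move=> hu hv h; nra. Qed.

Lemma sq_mono {R : realType} (a u v : R) : 0 <= u -> u <= v -> v <= a ->
  (a-v)*(a-v) <= (a-u)*(a-u).
Proof. move=> hu huv hva; nra. Qed.

Lemma face {R : realType} (a1 a2 a3 s t : R) :
  0 <= a1 -> 0 <= a2 -> 0 <= a3 ->
  1/2 <= a1*a1 -> 1/2 <= a2*a2 -> 1/2 <= a3*a3 ->
  (a1*a1)*(a2*a2)*(a3*a3) = 1 ->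
  0 <= s <= 1 -> 0 <= t <= 1 ->
  2 < s*s*(a1*a1) + t*t*(a2*a2) + a3*a3 ->
  2 < a1*a1 + (1-t)*(1-t)*(a2*a2) ->
  2 < (1-s)*(1-s)*(a1*a1) + a2*a2 + a3*a3 -> False.
Proof.
move=> h1 h2 h3 hx hy hz e /andP[s0 s1] /andP[t0 t1] SA SB SC.
pose x := a1*a1. pose y := a2*a2. pose z := a3*a3.
have e' : x*y*z = 1 by [].
pose P := (1-s)*a1. pose Q := (1-t)*a2.
have P0 : 0 <= P by apply: mulr_ge0; lra.
have Q0 : 0 <= Q by apply: mulr_ge0; lra.
have Pa : P <= a1.
  have : 0 <= s*a1 by apply: mulr_ge0.
  rewrite /P; lra.
have Qa : Q <= a2.
  have : 0 <= t*a2 by apply: mulr_ge0.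
  rewrite /Q; lra.
have HC : 2 - y - z < P*P by rewrite /P /y /z; lra.
have HB : 2 - x < Q*Q by rewrite /Q /x; lra.
have HA : 2 < (a1-P)*(a1-P) + (a2-Q)*(a2-Q) + z by rewrite /P /Q /z; lra.
have xge : 1/2 <= x by []. have yge : 1/2 <= y by []. have zge : 1/2 <= z by [].
have A1 : (a1-P)*(a1-P) <= x by have := sq_mono a1 0 P (lexx 0) P0 Pa; rewrite subr0.
have A2 : (a2-Q)*(a2-Q) <= y by have := sq_mono a2 0 Q (lexx 0) Q0 Qa; rewrite subr0.
clear SA SB SC.
case: (lerP x 2) => hx2; case: (lerP (y+z) 2) => hyz.
-
  have hb : 0 <= 2 - y - z by lra.
  have [b0 bb] := sqrt_facts _ hb.
  have hd : 0 <= 2 - x by lra.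
  have [d0 dd] := sqrt_facts _ hd.
  set b := Num.sqrt (2-y-z) in b0 bb. set d := Num.sqrt (2-x) in d0 dd.
  have bP : b <= P by apply: sq_lt => //; rewrite bb.
  have dQ : d <= Q by apply: sq_lt => //; rewrite dd.
  have bx : 2 - y - z <= x.
    rewrite -bb /x; apply: ler_pM => //; apply: (le_trans bP Pa).
  have dy : 2 - x <= y.
    rewrite -dd /y; apply: ler_pM => //; apply: (le_trans dQ Qa).
  have B1 : (a1-P)*(a1-P) <= (a1-b)*(a1-b) by apply: sq_mono.
  have B2 : (a2-Q)*(a2-Q) <= (a2-d)*(a2-d) by apply: sq_mono.
  pose ee := a1*b. pose ff := a2*d.
  have ee0 : 0 <= ee by apply: mulr_ge0.
  have ff0 : 0 <= ff by apply: mulr_ge0.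
  have eeU : ee*ee = x*(2-y-z) by rewrite -bb /ee /x; ring.
  have ffV : ff*ff = y*(2-x) by rewrite -dd /ff /y; ring.
  have key : 1 <= ee + ff.
    case: (lerP 1 ee) => he; first lra.
    case: (lerP 1 ff) => hf; first lra.
    have hU : x*(2-y-z) <= 1.
      rewrite -eeU; have : ee*ee <= ee*1 by apply: ler_wpM2l => //; lra.
      lra.
    have hV : y*(2-x) <= 1.
      rewrite -ffV; have : ff*ff <= ff*1 by apply: ler_wpM2l => //; lra.
      lra.
    have hc := c4_ineq xge yge zge e' hx2 hyz dy hU hV.
    rewrite -eeU -ffV in hc.
    have ef0 : 0 <= 2*(ee*ff) by apply: mulr_ge0 => //; apply: mulr_ge0.
    have h4 : (1 - ee*ee - ff*ff) <= 2*(ee*ff).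
      case: (lerP (1 - ee*ee - ff*ff) 0) => h0; first lra.
      apply: sq_le => //; first lra.
      have -> : 2*(ee*ff)*(2*(ee*ff)) = 4*(ee*ee)*(ff*ff) by ring.
      exact: hc.
    have hsq : 1*1 <= (ee+ff)*(ee+ff).
      have -> : (ee+ff)*(ee+ff) = ee*ee + ff*ff + 2*(ee*ff) by ring.
      lra.
    by apply: sq_le => //; lra.
  have : (a1-b)*(a1-b) + (a2-d)*(a2-d) + z <= 2.
    have -> : (a1-b)*(a1-b) + (a2-d)*(a2-d) + z = x - 2*ee + b*b + y - 2*ff + d*d + z
      by rewrite /x /y /ee /ff; ring.
    rewrite bb dd; lra.
  lra.
-
  have hd : 0 <= 2 - x by lra.
  have [d0 dd] := sqrt_facts _ hd.
  set d := Num.sqrt (2-x) in d0 dd.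
  have dQ : d <= Q by apply: sq_lt => //; rewrite dd.
  have dy : 2 - x <= y.
    rewrite -dd /y; apply: ler_pM => //; apply: (le_trans dQ Qa).
  have B2 : (a2-Q)*(a2-Q) <= (a2-d)*(a2-d) by apply: sq_mono.
  have c2 := c2_ineq xge yge zge e' (ltW hyz) dy.
  have h0 : 0 <= 2*(a2*d) by apply: mulr_ge0 => //; apply: mulr_ge0.
  have hk : y + z <= 2*(a2*d).
    apply: sq_le => //; first lra.
    have -> : (2*(a2*d))*(2*(a2*d)) = 4*y*(2-x) by rewrite -dd /y; ring.
    exact: c2.
  have : (a2-d)*(a2-d) = y - 2*(a2*d) + (2 - x) by rewrite -dd /y; ring.
  lra.
-
  have hb : 0 <= 2 - y - z by lra.
  have [b0 bb] := sqrt_facts _ hb.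
  set b := Num.sqrt (2-y-z) in b0 bb.
  have bP : b <= P by apply: sq_lt => //; rewrite bb.
  have B1 : (a1-P)*(a1-P) <= (a1-b)*(a1-b) by apply: sq_mono.
  have c3 := c3_ineq yge zge e' (ltW hx2) hyz.
  have h0 : 0 <= 2*(a1*b) by apply: mulr_ge0 => //; apply: mulr_ge0.
  have hk : x <= 2*(a1*b).
    apply: sq_le => //; first lra.
    have -> : (2*(a1*b))*(2*(a1*b)) = 4*x*(2-y-z) by rewrite -bb /x; ring.
    have hx0 : 0 <= x by lra.
    have : x*x <= x*(4*(2-y-z)) by apply: ler_wpM2l.
    lra.
  have : (a1-b)*(a1-b) = x - 2*(a1*b) + (2 - y - z) by rewrite -bb /x; ring.
  lra.
-
  exact: (c1_ineq yge zge e' (ltW hx2) (ltW hyz)).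
Qed.
Arguments face {R a1 a2 a3 s t}.



Lemma core_bd {R : realType} (a b c p q r : R) :
  0 <= a -> 0 <= b -> 0 <= c ->
  1/2 <= a*a -> 1/2 <= b*b -> 1/2 <= c*c ->
  (a*a)*(b*b)*(c*c) = 1 ->
  0 <= p <= 1 -> 0 <= q <= 1 -> 0 <= r <= 1 ->
  2 < p* p*(a*a) + q*q*(b*b) + c*c ->
  2 < a*a + (1-q)*(1-q)*(b*b) + r*r*(c*c) ->
  2 < (1-p)*(1-p)*(a*a) + b*b + (1-r)*(1-r)*(c*c) ->
  (p = 0 \/ p = 1 \/ q = 0 \/ q = 1 \/ r = 0 \/ r = 1) -> False.
Proof.
move=> ha hb hc hx hy hz e hp hq hr S1 S2 S3.
move: (hp) (hq) (hr) => /andP[p0 p1] /andP[q0 q1] /andP[r0 r1].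
have hq' : 0 <= 1 - q <= 1 by apply/andP; split; lra.
have hp' : 0 <= 1 - p <= 1 by apply/andP; split; lra.
have hr' : 0 <= 1 - r <= 1 by apply/andP; split; lra.
case=> [E|[E|[E|[E|[E|E]]]]]; rewrite {}E in S1 S2 S3 *.
-
  apply: (face hc hb ha hz hy hx _ hr hq'); lra.
-
  apply: (face hb hc ha hy hz hx _ hq' hr); lra.
-
  apply: (face hc ha hb hz hx hy _ hr' hp'); lra.
-
  apply: (face ha hc hb hx hz hy _ hp' hr'); lra.
-
  apply: (face ha hb hc hx hy hz _ hp hq); lra.
-
  apply: (face hb ha hc hy hx hz _ hq hp); lra.
Qed.
Arguments core_bd {R a b c p q r}.


Lemma min3 {R : realType} (t1 t2 t3 : R) :
  exists k, [/\ k <= t1, k <= t2, k <= t3 & (k = t1 \/ k = t2 \/ k = t3)].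
Proof.
case: (lerP t1 t2) => h12; case: (lerP t1 t3) => h13; case: (lerP t2 t3) => h23.
all: first [ by exists t1; split; [lra|lra|lra|left]
           | by exists t2; split; [lra|lra|lra|right; left]
           | by exists t3; split; [lra|lra|lra|right; right] ].
Qed.

Lemma core {R : realType} (a b c p q r : R) :
  0 <= a -> 0 <= b -> 0 <= c ->
  1/2 <= a*a -> 1/2 <= b*b -> 1/2 <= c*c ->
  (a*a)*(b*b)*(c*c) = 1 ->
  0 <= p <= 1 -> 0 <= q <= 1 -> 0 <= r <= 1 ->
  2 < p* p*(a*a) + q*q*(b*b) + c*c ->
  2 < a*a + (1-q)*(1-q)*(b*b) + r*r*(c*c) ->
  2 < (1-p)*(1-p)*(a*a) + b*b + (1-r)*(1-r)*(c*c) -> False.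
Proof.
move=> ha hb hc hx hy hz e hp hq hr S1 S2 S3.
have BD := core_bd ha hb hc hx hy hz e hp hq hr S1 S2 S3.
move: (hp) (hq) (hr) => /andP[p0 p1] /andP[q0 q1] /andP[r0 r1].
have hp0 : 0 < p.
  rewrite lt_neqAle p0 andbT; apply/negP => /eqP E; apply: BD; left; by rewrite -E.
have hp1 : p < 1.
  rewrite lt_neqAle p1 andbT; apply/negP => /eqP E; apply: BD; right; left; by rewrite E.
have hq0 : 0 < q.
  rewrite lt_neqAle q0 andbT; apply/negP => /eqP E; apply: BD; do 2 right; left; by rewrite -E.
have hq1 : q < 1.
  rewrite lt_neqAle q1 andbT; apply/negP => /eqP E; apply: BD; do 3 right; left; by rewrite E.
have hr0 : 0 < r.
  rewrite lt_neqAle r0 andbT; apply/negP => /eqP E; apply: BD; do 4 right; left; by rewrite -E.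
have hr1 : r < 1.
  rewrite lt_neqAle r1 andbT; apply/negP => /eqP E; apply: BD; do 5 right; by rewrite E.
clear BD.
pose x := a*a. pose y := b*b. pose z := c*c.
have x0 : 0 < x by rewrite /x; lra.
have y0 : 0 < y by rewrite /y; lra.
have z0 : 0 < z by rewrite /z; lra.
pose A1 := 2* p*x. pose B1 := 2*q*y. pose B2 := 2*(1-q)*y.
pose C2 := 2*r*z. pose A3 := 2*(1-p)*x. pose C3 := 2*(1-r)*z.
have A10 : 0 < A1 by rewrite /A1; apply: mulr_gt0 => //; lra.
have B10 : 0 < B1 by rewrite /B1; apply: mulr_gt0 => //; lra.
have B20 : 0 < B2 by rewrite /B2; apply: mulr_gt0 => //; lra.
have C20 : 0 < C2 by rewrite /C2; apply: mulr_gt0 => //; lra.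
have A30 : 0 < A3 by rewrite /A3; apply: mulr_gt0 => //; lra.
have C30 : 0 < C3 by rewrite /C3; apply: mulr_gt0 => //; lra.
pose d1 := B2*C3 + 2*z*B1. pose d2 := -(A3*C2 + 2*z*A1). pose d3 := -(2*y*A3 + A1*B2).
pose det := A1*B2*C3 - B1*C2*A3.
have d1p : 0 < d1.
  have : 0 < B2*C3 by apply: mulr_gt0.
  have : 0 < 2*z*B1 by apply: mulr_gt0 => //; apply: mulr_gt0.
  rewrite /d1; lra.
have d2n : 0 < - d2.
  have : 0 < A3*C2 by apply: mulr_gt0.
  have : 0 < 2*z*A1 by apply: mulr_gt0 => //; apply: mulr_gt0.
  rewrite /d2; lra.
have d3n : 0 < - d3.
  have : 0 < 2*y*A3 by apply: mulr_gt0 => //; apply: mulr_gt0.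
  have : 0 < A1*B2 by apply: mulr_gt0.
  rewrite /d3; lra.
have move : forall k : R, 0 <= k*det ->
   0 <= p + k*d1 <= 1 -> 0 <= q + k*d2 <= 1 -> 0 <= r + k*d3 <= 1 ->
   (p + k*d1 = 0 \/ p + k*d1 = 1 \/ q + k*d2 = 0 \/ q + k*d2 = 1 \/
    r + k*d3 = 0 \/ r + k*d3 = 1) -> False.
  move=> k hk hP hQ hR.
  apply: (core_bd ha hb hc hx hy hz e hP hQ hR).
  - have -> : (p + k*d1)*(p + k*d1)*(a*a) + (q + k*d2)*(q + k*d2)*(b*b) + c*c
      = (p* p*(a*a) + q*q*(b*b) + c*c) + k*det + (k*k)*(d1*d1*x + d2*d2*y)
      by rewrite /det /d1 /d2 /A1 /B1 /B2 /C2 /A3 /C3 /x /y /z; ring.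
    have : 0 <= (k*k)*(d1*d1*x + d2*d2*y).
      apply: mulr_ge0; first by rewrite -expr2 sqr_ge0.
      have : 0 <= d1*d1*x by apply: mulr_ge0; [rewrite -expr2 sqr_ge0|lra].
      have : 0 <= d2*d2*y by apply: mulr_ge0; [rewrite -expr2 sqr_ge0|lra].
      lra.
    lra.
  - have -> : a*a + (1 - (q + k*d2))*(1 - (q + k*d2))*(b*b) + (r + k*d3)*(r + k*d3)*(c*c)
      = (a*a + (1-q)*(1-q)*(b*b) + r*r*(c*c)) + k*det + (k*k)*(d2*d2*y + d3*d3*z)
      by rewrite /det /d1 /d2 /d3 /A1 /B1 /B2 /C2 /A3 /C3 /x /y /z; ring.
    have : 0 <= (k*k)*(d2*d2*y + d3*d3*z).
      apply: mulr_ge0; first by rewrite -expr2 sqr_ge0.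
      have : 0 <= d2*d2*y by apply: mulr_ge0; [rewrite -expr2 sqr_ge0|lra].
      have : 0 <= d3*d3*z by apply: mulr_ge0; [rewrite -expr2 sqr_ge0|lra].
      lra.
    lra.
  - have -> : (1 - (p + k*d1))*(1 - (p + k*d1))*(a*a) + b*b + (1 - (r + k*d3))*(1 - (r + k*d3))*(c*c)
      = ((1-p)*(1-p)*(a*a) + b*b + (1-r)*(1-r)*(c*c)) + k*det + (k*k)*(d1*d1*x + d3*d3*z)
      by rewrite /det /d1 /d2 /d3 /A1 /B1 /B2 /C2 /A3 /C3 /x /y /z; ring.
    have : 0 <= (k*k)*(d1*d1*x + d3*d3*z).
      apply: mulr_ge0; first by rewrite -expr2 sqr_ge0.
      have : 0 <= d1*d1*x by apply: mulr_ge0; [rewrite -expr2 sqr_ge0|lra].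
      have : 0 <= d3*d3*z by apply: mulr_ge0; [rewrite -expr2 sqr_ge0|lra].
      lra.
    lra.
clear S1 S2 S3 e hx hy hz ha hb hc.
clearbody x y z A1 B1 B2 C2 A3 C3 d1 d2 d3 det.
have d1n0 : d1 != 0 by rewrite gt_eqF.
have d2n0 : d2 != 0 by apply/eqP => E; move: d2n; rewrite E oppr0 ltxx.
have d3n0 : d3 != 0 by apply/eqP => E; move: d3n; rewrite E oppr0 ltxx.
case: (lerP 0 det) => hdet.
- pose t1 := (1-p)/d1. pose t2 := q/(-d2). pose t3 := r/(-d3).
  have e1 : t1*d1 = 1 - p by rewrite /t1 divfK.
  have e2 : t2*d2 = - q.
    have : t2 * (-d2) = q by rewrite /t2 divfK // oppr_eq0.
    rewrite mulrN; lra.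
  have e3 : t3*d3 = - r.
    have : t3 * (-d3) = r by rewrite /t3 divfK // oppr_eq0.
    rewrite mulrN; lra.
  have t10 : 0 < t1 by rewrite /t1; apply: divr_gt0 => //; lra.
  have t20 : 0 < t2 by rewrite /t2; apply: divr_gt0.
  have t30 : 0 < t3 by rewrite /t3; apply: divr_gt0.
  have gen : forall k, 0 <= k -> k <= t1 -> k <= t2 -> k <= t3 ->
     (k = t1 \/ k = t2 \/ k = t3) -> False.
    move=> k k0 kt1 kt2 kt3 keq.
    have hk1 : k*d1 <= t1*d1 by apply: ler_wpM2r => //; lra.
    have hk2 : t2*d2 <= k*d2.
      have : k*(-d2) <= t2*(-d2) by apply: ler_wpM2r => //; lra.
      rewrite !mulrN; lra.
    have hk3 : t3*d3 <= k*d3.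
      have : k*(-d3) <= t3*(-d3) by apply: ler_wpM2r => //; lra.
      rewrite !mulrN; lra.
    have kd1 : 0 <= k*d1 by apply: mulr_ge0 => //; lra.
    have kd2 : k*d2 <= 0 by rewrite -(opprK d2) mulrN oppr_le0; apply: mulr_ge0 => //; lra.
    have kd3 : k*d3 <= 0 by rewrite -(opprK d3) mulrN oppr_le0; apply: mulr_ge0 => //; lra.
    apply: (move k).
    - by apply: mulr_ge0.
    - apply/andP; split; lra.
    - apply/andP; split; lra.
    - apply/andP; split; lra.
    - case: keq => [->|[->|->]].
      + right; left; lra.
      + do 2 right; left; lra.
      + do 4 right; left; lra.
  have [k [k1 k2 k3 keq]] := min3 t1 t2 t3.
  apply: (gen k) => //.
  by case: keq => [->|[->|->]]; apply: ltW.
- pose t1 := p/d1. pose t2 := (1-q)/(-d2). pose t3 := (1-r)/(-d3).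
  have e1 : t1*d1 = p by rewrite /t1 divfK.
  have e2 : t2*d2 = - (1-q).
    have : t2 * (-d2) = 1-q by rewrite /t2 divfK // oppr_eq0.
    rewrite mulrN; lra.
  have e3 : t3*d3 = - (1-r).
    have : t3 * (-d3) = 1-r by rewrite /t3 divfK // oppr_eq0.
    rewrite mulrN; lra.
  have t10 : 0 < t1 by rewrite /t1; apply: divr_gt0.
  have t20 : 0 < t2 by rewrite /t2; apply: divr_gt0 => //; lra.
  have t30 : 0 < t3 by rewrite /t3; apply: divr_gt0 => //; lra.
  have gen : forall k, 0 <= k -> k <= t1 -> k <= t2 -> k <= t3 ->
     (k = t1 \/ k = t2 \/ k = t3) -> False.
    move=> k k0 kt1 kt2 kt3 keq.
    have hk1 : k*d1 <= t1*d1 by apply: ler_wpM2r => //; lra.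
    have hk2 : t2*d2 <= k*d2.
      have : k*(-d2) <= t2*(-d2) by apply: ler_wpM2r => //; lra.
      rewrite !mulrN; lra.
    have hk3 : t3*d3 <= k*d3.
      have : k*(-d3) <= t3*(-d3) by apply: ler_wpM2r => //; lra.
      rewrite !mulrN; lra.
    have kd1 : 0 <= k*d1 by apply: mulr_ge0 => //; lra.
    have kd2 : k*d2 <= 0 by rewrite -(opprK d2) mulrN oppr_le0; apply: mulr_ge0 => //; lra.
    have kd3 : k*d3 <= 0 by rewrite -(opprK d3) mulrN oppr_le0; apply: mulr_ge0 => //; lra.
    apply: (move (-k)).
    - have : 0 <= k * (- det) by apply: mulr_ge0 => //; lra.
      by rewrite mulNr -mulrN.
    - rewrite mulNr; apply/andP; split; lra.
    - rewrite mulNr; apply/andP; split; lra.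
    - rewrite mulNr; apply/andP; split; lra.
    - rewrite !mulNr; case: keq => [->|[->|->]].
      + left; lra.
      + do 3 right; left; lra.
      + do 5 right; lra.
  have [k [k1 k2 k3 keq]] := min3 t1 t2 t3.
  apply: (gen k) => //.
  by case: keq => [->|[->|->]]; apply: ltW.
Qed.


Lemma all3 (i j k m : 'I_3) : i != j -> j != k -> i != k -> [|| m == i, m == j | m == k].
Proof.
by case: i => [[|[|[|?]]] ?] //; case: j => [[|[|[|?]]] ?] //;
   case: k => [[|[|[|?]]] ?] //; case: m => [[|[|[|?]]] ?].
Qed.

Lemma sum3 {R : realType} (F : 'I_3 -> R) (i j k : 'I_3) : i != j -> j != k -> i != k ->
  \sum_(m < 3) F m = F i + F j + F k.
Proof.
move=> hij hjk hik.
rewrite (bigD1 i) //= (bigD1 j) /=; last by rewrite eq_sym.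
rewrite (bigD1 k) /=; last by rewrite eq_sym hik /= eq_sym.
rewrite big1 ?addr0 ?addrA // => m /andP[/andP[mi mj] mk].
by move: (all3 _ _ _ m hij hjk hik); rewrite (negbTE mi) (negbTE mj) (negbTE mk).
Qed.

Lemma prod3 {R : realType} (F : 'I_3 -> R) (i j k : 'I_3) : i != j -> j != k -> i != k ->
  \prod_(m < 3) F m = F i * F j * F k.
Proof.
move=> hij hjk hik.
rewrite (bigD1 i) //= (bigD1 j) /=; last by rewrite eq_sym.
rewrite (bigD1 k) /=; last by rewrite eq_sym hik /= eq_sym.
rewrite big1 ?mulr1 ?mulrA // => m /andP[/andP[mi mj] mk].
by move: (all3 _ _ _ m hij hjk hik); rewrite (negbTE mi) (negbTE mj) (negbTE mk).
Qed.

Lemma dotpC {R : realType} (x y : 'rV[R]_3) : dotp x y = dotp y x.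
Proof. by rewrite /dotp; apply: eq_bigr => j _; rewrite mulrC. Qed.

Lemma dotp_suml {R : realType} (f : 'I_3 -> 'rV[R]_3) z :
  dotp (\sum_k f k) z = \sum_k dotp (f k) z.
Proof.
rewrite /dotp; under eq_bigr do rewrite summxE mulr_suml.
exact: exchange_big.
Qed.

Lemma dotpZl {R : realType} (a : R) x z : dotp (a *: x) z = a * dotp x z.
Proof. by rewrite /dotp mulr_sumr; apply: eq_bigr => j _; rewrite mxE mulrA. Qed.

Lemma dotp_vec {R : realType} (u : 'I_3 -> 'rV[R]_3) (c d : 'I_3 -> R) :
  is_brick u ->
  dotp (\sum_k c k *: u k) (\sum_k d k *: u k) = \sum_k c k * d k * dotp (u k) (u k).
Proof.
move=> hb; rewrite dotp_suml; apply: eq_bigr => k _.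
rewrite dotpZl (dotpC (u k)) dotp_suml.
rewrite (bigD1 k) //= big1 ?addr0.
  by rewrite dotpZl mulrA [c k * _]mulrC.
move=> m mk; rewrite dotpZl hb ?mulr0 //.
Qed.

Lemma vec_sub {R : realType} (O : 'rV[R]_3) (u : 'I_3 -> 'rV[R]_3) (c d : 'I_3 -> R) :
  (O + \sum_k c k *: u k) - (O + \sum_k d k *: u k) = \sum_k (c k - d k) *: u k.
Proof.
rewrite opprD addrACA subrr add0r -sumrB.
by apply: eq_bigr => k _; rewrite scalerBl.
Qed.

Lemma skew_neq {R : realType} (O : 'rV[R]_3) (u : 'I_3 -> 'rV[R]_3) i s j r k :
  skew_edges O u i s j r -> k != i -> k != j -> s k != r k.
Proof.
move=> [hij hno] ki kj; apply/negP => /eqP hk; apply: hno.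
have b01 : forall b : bool, 0 <= (b%:R : R) <= 1.
  by case; rewrite /= ?lexx ?ler01.
exists (O + \sum_m (if m == i then ((r i)%:R : R) else (s m)%:R) *: u m); split.
- by exists (r i)%:R; split.
- exists (s j)%:R; split => //.
  congr (O + _); apply: eq_bigr => m _.
  case: (eqVneq m i) => [->|mi]; first by rewrite (negbTE hij).
  case: (eqVneq m j) => [->|mj] //.
  have : m == k.
    move: (all3 i j k m hij); rewrite eq_sym kj eq_sym ki => /(_ isT isT).
    by rewrite (negbTE mi) (negbTE mj).
  by move/eqP ->; rewrite hk.
Qed.
Arguments skew_neq {R O u i s j r k}.

Lemma dotp_ge0 {R : realType} (x : 'rV[R]_3) : 0 <= dotp x x.
Proof. by rewrite /dotp; apply: sumr_ge0 => j _; rewrite -expr2 sqr_ge0. Qed.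

Lemma vnorm_sq {R : realType} (x : 'rV[R]_3) : vnorm x * vnorm x = dotp x x.
Proof. by rewrite /vnorm -expr2 sqr_sqrtr // dotp_ge0. Qed.

Lemma bool_sq {R : realType} (b c : bool) (t : R) : b != c ->
  ((t - (b%:R : R)) * (t - (b%:R : R)) = (if b then 1 - t else t) * (if b then 1 - t else t)) /\
  ((t - (c%:R : R)) * (t - (c%:R : R)) = (1 - (if b then 1 - t else t)) * (1 - (if b then 1 - t else t))) /\
  (((b%:R : R) - (c%:R : R)) * ((b%:R : R) - (c%:R : R)) = 1).
Proof. by case: b; case: c => //= _; do !split; ring. Qed.

Theorem mainTheorem1 (R : realType) (O : 'rV[R]_3) (u : 'I_3 -> 'rV[R]_3)
  (i1 i2 i3 : 'I_3) (s1 s2 s3 : 'I_3 -> bool) (A B C : 'rV[R]_3) :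
  is_brick u ->
  brick_volume u = 1 ->
  (forall k : 'I_3, 1 / Num.sqrt 2 <= vnorm (u k)) ->
  skew_edges O u i1 s1 i2 s2 ->
  skew_edges O u i2 s2 i3 s3 ->
  skew_edges O u i1 s1 i3 s3 ->
  on_edge O u i1 s1 A -> on_edge O u i2 s2 B -> on_edge O u i3 s3 C ->
  ~ collinear A B C ->
  dist A B <= Num.sqrt 2 \/ dist B C <= Num.sqrt 2 \/ dist C A <= Num.sqrt 2.
Proof.
move=> hb hvol hlen sk12 sk23 sk13 [t1 [ht1 eA]] [t2 [ht2 eB]] [t3 [ht3 eC]] _.
have d12 : i1 != i2 by case: sk12.
have d23 : i2 != i3 by case: sk23.
have d13 : i1 != i3 by case: sk13.
have n3 : s1 i3 != s2 i3 by apply: (skew_neq sk12); rewrite eq_sym //.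
have n1 : s2 i1 != s3 i1 by apply: (skew_neq sk23).
have n2 : s1 i2 != s3 i2 by apply: (skew_neq sk13) => //; rewrite eq_sym.
pose L k := vnorm (u k).
have LL : forall k, L k * L k = dotp (u k) (u k) by move=> k; exact: vnorm_sq.
have L0 : forall k, 0 <= L k by move=> k; exact: sqrtr_ge0.
have L2 : forall k, 1/2 <= L k * L k.
  move=> k; have h := hlen k.
  have s2p : 0 <= 1 / Num.sqrt (2:R) by rewrite divr_ge0 // sqrtr_ge0.
  have : (1 / Num.sqrt 2) * (1 / Num.sqrt 2) <= L k * L k by apply: ler_pM.
  suff -> : (1 / Num.sqrt 2) * (1 / Num.sqrt 2) = 1/2 :> R by [].
  have : Num.sqrt (2:R) * Num.sqrt 2 = 2 by rewrite -expr2 sqr_sqrtr // ler0n.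
  have : Num.sqrt (2:R) != 0 by rewrite sqrtr_eq0 -ltNge ltr0n.
  move=> nz e2; rewrite -[in RHS]e2; field; exact: nz.
have vol : (L i1 * L i1) * (L i2 * L i2) * (L i3 * L i3) = 1.
  have := hvol; rewrite /brick_volume (prod3 _ _ _ _ d12 d23 d13) => hv.
  have -> : (L i1 * L i1) * (L i2 * L i2) * (L i3 * L i3)
    = (L i1 * L i2 * L i3) * (L i1 * L i2 * L i3) by ring.
  by rewrite /L hv mulr1.
pose cA k := if k == i1 then t1 else ((s1 k)%:R : R).
pose cB k := if k == i2 then t2 else ((s2 k)%:R : R).
pose cC k := if k == i3 then t3 else ((s3 k)%:R : R).
have DD : forall (X Y : 'rV[R]_3) cX cY,
    X = O + \sum_k cX k *: u k -> Y = O + \sum_k cY k *: u k ->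
    dotp (X - Y) (X - Y) = (cX i1 - cY i1) * (cX i1 - cY i1) * (L i1 * L i1)
      + (cX i2 - cY i2) * (cX i2 - cY i2) * (L i2 * L i2)
      + (cX i3 - cY i3) * (cX i3 - cY i3) * (L i3 * L i3).
  move=> X Y cX cY -> ->; rewrite vec_sub dotp_vec // (sum3 _ _ _ _ d12 d23 d13).
  by rewrite !LL.
have DAB := DD A B cA cB eA eB.
have DBC := DD B C cB cC eB eC.
have DCA := DD C A cC cA eC eA.
have cA1 : cA i1 = t1 by rewrite /cA /= eqxx.
have cA2 : cA i2 = (s1 i2)%:R by rewrite /cA /= eq_sym (negbTE d12).
have cA3 : cA i3 = (s1 i3)%:R by rewrite /cA /= eq_sym (negbTE d13).
have cB1 : cB i1 = (s2 i1)%:R by rewrite /cB /= (negbTE d12).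
have cB2 : cB i2 = t2 by rewrite /cB /= eqxx.
have cB3 : cB i3 = (s2 i3)%:R by rewrite /cB /= eq_sym (negbTE d23).
have cC1 : cC i1 = (s3 i1)%:R by rewrite /cC /= (negbTE d13).
have cC2 : cC i2 = (s3 i2)%:R by rewrite /cC /= (negbTE d23).
have cC3 : cC i3 = t3 by rewrite /cC /= eqxx.
rewrite cA1 cA2 cA3 cB1 cB2 cB3 in DAB.
rewrite cB1 cB2 cB3 cC1 cC2 cC3 in DBC.
rewrite cA1 cA2 cA3 cC1 cC2 cC3 in DCA.
have n3' : s2 i3 != s1 i3 by rewrite eq_sym.
have [P1 [P2 X1]] := bool_sq _ _ t1 n1.
have [Q1 [Q2 X2]] := bool_sq _ _ t2 n2.
have [R1 [R2 _]] := bool_sq _ _ t3 n3'.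
have [_ [_ X3]] := bool_sq _ _ t3 n3.
set p := (if s2 i1 then 1 - t1 else t1) in P1 P2.
set q := (if s1 i2 then 1 - t2 else t2) in Q1 Q2.
set r := (if s2 i3 then 1 - t3 else t3) in R1 R2.
have hp : 0 <= p <= 1 by rewrite /p; case: (s2 i1); move: ht1 => /andP[? ?]; apply/andP; split; lra.
have hq : 0 <= q <= 1 by rewrite /q; case: (s1 i2); move: ht2 => /andP[? ?]; apply/andP; split; lra.
have hr : 0 <= r <= 1 by rewrite /r; case: (s2 i3); move: ht3 => /andP[? ?]; apply/andP; split; lra.
have EAB : dotp (A - B) (A - B) = p * p * (L i1 * L i1) + q * q * (L i2 * L i2) + L i3 * L i3.
  rewrite DAB X3 -P1 -Q1; ring.
have EBC : dotp (B - C) (B - C) = L i1 * L i1 + (1 - q) * (1 - q) * (L i2 * L i2) + r * r * (L i3 * L i3).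
  rewrite DBC X1 -Q2 -R1; ring.
have ECA : dotp (C - A) (C - A) = (1 - p) * (1 - p) * (L i1 * L i1) + L i2 * L i2 + (1 - r) * (1 - r) * (L i3 * L i3).
  rewrite DCA -P2 -R2.
  have -> : ((s3 i2)%:R - (s1 i2)%:R) * ((s3 i2)%:R - (s1 i2)%:R) = 1 :> R.
    have -> : ((s3 i2)%:R - (s1 i2)%:R) * ((s3 i2)%:R - (s1 i2)%:R) = ((s1 i2)%:R - (s3 i2)%:R) * ((s1 i2)%:R - (s3 i2)%:R) :> R by ring.
    exact: X2.
  ring.
have key := @core _ (L i1) (L i2) (L i3) p q r (L0 i1) (L0 i2) (L0 i3) (L2 i1) (L2 i2) (L2 i3) vol hp hq hr.
rewrite /dist /vnorm.
have h20 : (0:R) <= 2 by lra.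
case: (lerP (dotp (A - B) (A - B)) 2) => h1; first by left; rewrite ler_sqrt.
case: (lerP (dotp (B - C) (B - C)) 2) => h2; first by right; left; rewrite ler_sqrt.
case: (lerP (dotp (C - A) (C - A)) 2) => h3; first by right; right; rewrite ler_sqrt.
exfalso; apply: key.
- by rewrite -EAB.
- by rewrite -EBC.
- by rewrite -ECA.
Qed.
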